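(* Let $G=([n],E)$ be a persistent graph and let $S\in\Xi(G)$ be a 3-simplex containing vertices $a<b<c$ such that $\{a,b,c\}\notin F_2(C)$, where $C=C(n+2,3)$. Then there exists another 3-simplex $S'\in\Xi(G)$, $S'\neq S$, with $\{a,b,c\}\subset S'$.
   Context: The cyclic polytope $C=C(n+2,3)$ has vertices $0,1,\dots,n+1$ (ordered along the moment curve $t\mapsto(t,t^2,t^3)$), and its 2-faces (as vertex sets) are $F_2(C)=\{\{0,i,i+1\},\{i-1,i,n+1\}: 0<i<n+1\}$. A graph $G=([n],E)$ is persistent if (1) $\{i,i+1\}\in E$ for all $1\le i<n$; (2) (X-property) if $\{a,c\},\{b,d\}\in E$ for $a<b<c<d$ then $\{a,d\}\in E$; (3) (bar-property) for every edge $\{a,b\}\in E$ with $a<b-1$ there is $x$ with $a<x<b$ and $\{a,x\},\{x,b\}\in E$. $\hat G$ is the graph on $\{0,\dots,n+1\}$ with edge set $E$ together with all pairs containing $0$ or $n+1$. For an edge $e=\{v,w\}\in E$ with $v<w$, $\ell_G(e)=\max\{i : i<v,\ \{i,w\}\in E(\hat G)\}$, $r_G(e)=\min\{i : w<i,\ \{i,v\}\in E(\hat G)\}$, $\xi_G(e)=\{\ell_G(e),v,w,r_G(e)\}$, and $\Xi(G)=\{\xi_G(e): e\in E\}$. *)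

(* Defs.v *)
From HB Require Import structures.
From mathcomp Require Import all_boot.
From mathcomp Require Import finmap.
Set Implicit Arguments. Unset Strict Implicit. Unset Printing Implicit Defensive.
Local Open Scope fset_scope.

(* A graph G = ([n], E) is given by a relation E on nat where E a b (for a < b)
   means that {a, b} is an edge; edges are required to lie in [n] = {1..n}. *)
Definition graph_on (n : nat) (E : rel nat) : Prop :=
  forall a b, E a b -> [/\ 1 <= a, a < b & b <= n].

Definition adj (E : rel nat) (x y : nat) : bool := E x y || E y x.

Definition persistent (n : nat) (E : rel nat) : Prop :=
  [/\ (forall i, 1 <= i -> i < n -> adj E i i.+1),
      (forall a b c d, a < b -> b < c -> c < d ->
          adj E a c -> adj E b d -> adj E a d)
    & (forall a b, a < b -> adj E a b -> a < b.-1 ->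
          exists2 x, a < x < b & adj E a x && adj E x b)].

Definition hadj (n : nat) (E : rel nat) (x y : nat) : bool :=
  adj E x y ||
  [&& x != y, x <= n.+1, y <= n.+1 &
      [|| x == 0, y == 0, x == n.+1 | y == n.+1]].

Definition ellG (n : nat) (E : rel nat) (v w : nat) : nat :=
  \max_(0 <= i < v | hadj n E i w) i.

(* r_G(e) = min { i : w < i, {i,v} in E(\hat G) } (all such i are <= n+1) *)
Definition rG (n : nat) (E : rel nat) (v w : nat) : nat :=
  \big[minn/n.+1]_(w.+1 <= i < n.+2 | hadj n E i v) i.

Definition xiG (n : nat) (E : rel nat) (v w : nat) : {fset nat} :=
  [fset ellG n E v w; v; w; rG n E v w].

Definition inXi (n : nat) (E : rel nat) (S : {fset nat}) : Prop :=
  exists v w, [/\ v < w, adj E v w & S = xiG n E v w].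

Definition inF2 (n : nat) (T : {fset nat}) : Prop :=
  exists i, [/\ 0 < i, i < n.+1 &
    T = [fset 0; i; i.+1] \/ T = [fset i.-1; i; n.+1]].

(* Main.v *)
Require Import Defs.
From HB Require Import structures.
From mathcomp Require Import all_boot zify.
From mathcomp Require Import finmap.
Local Open Scope fset_scope.
Set Implicit Arguments. Unset Strict Implicit.

Lemma bigmax_spec (P : pred nat) (v l : nat) :
  l < v -> P l -> (forall i, l < i -> i < v -> ~~ P i) ->
  \max_(0 <= i < v | P i) i = l.
Proof.
elim: v => [//|v IH] Hl Pl Hn.
rewrite big_mkcond big_nat_recr //= -big_mkcond.
case: (ltngtP l v) => Hlv.
- have -> : P v = false by apply/negbTE/Hn.
  by rewrite maxn0 IH // => i Hi1 Hi2; apply: Hn => //; lia.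
- lia.
- subst l; rewrite Pl.
  have : \max_(0 <= i < v | P i) i <= v.
    apply/bigmax_leqP_seq => i; rewrite mem_iota => Hi _; lia.
  by move/maxn_idPr.
Qed.

Lemma bigmin_ge (P : pred nat) (d r : nat) (s : seq nat) :
  r <= d -> (forall i, i \in s -> P i -> r <= i) ->
  r <= \big[minn/d]_(i <- s | P i) i.
Proof.
elim: s => [|x s IH] Hd Hs; first by rewrite big_nil.
rewrite big_cons.
have Hs' : forall i, i \in s -> P i -> r <= i.
  by move=> i Hi; apply: Hs; rewrite in_cons Hi orbT.
have := IH Hd Hs'. case: ifP => // Px. have := Hs x (mem_head _ _) Px. lia.
Qed.

Lemma bigmin_seq (P : pred nat) (d r : nat) (s : seq nat) :
  r <= d -> (forall i, i \in s -> P i -> r <= i) ->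
  (r \in s) && P r -> \big[minn/d]_(i <- s | P i) i = r.
Proof.
elim: s => [|x s IH] Hd Hs; first by [].
rewrite big_cons in_cons.
have Hs' : forall i, i \in s -> P i -> r <= i.
  by move=> i Hi; apply: Hs; rewrite in_cons Hi orbT.
case: (boolP (r \in s)) => Hrs /=.
- rewrite orbT /= => Pr. rewrite IH ?Hrs ?Pr //.
  case: ifP => // Px. have := Hs x (mem_head _ _) Px. lia.
- rewrite orbF => /andP [/eqP Ex Pr]. subst x. rewrite Pr.
  have := @bigmin_ge P d r s Hd Hs'. lia.
Qed.

Lemma bigmin_spec (P : pred nat) (d m k r : nat) :
  m <= r -> r < k -> r <= d -> P r -> (forall i, m <= i -> i < r -> ~~ P i) ->
  \big[minn/d]_(m <= i < k | P i) i = r.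
Proof.
move=> H1 H2 H3 H4 H5; apply: bigmin_seq => //.
- move=> i; rewrite mem_iota => /andP[Hm Hk] Pi; case: (ltnP i r) => // Hir.
  by rewrite (negbTE (H5 i Hm Hir)) in Pi.
- rewrite mem_iota H4 andbT; apply/andP; split; lia.
Qed.

Record good (h : nat -> nat -> bool) (N : nat) : Prop := Good {
  gsym : forall i j, h i j = h j i;
  gbnd : forall i j, h i j -> (i <= N) && (j <= N);
  gX : forall a b c d, a < b -> b < c -> c < d -> h a c -> h b d -> h a d;
  gbar : forall a b, a.+1 < b -> h a b -> exists2 x, a < x < b & h a x && h x b;
  gpath : forall i, i < N -> h i i.+1;
  g0 : forall j, 0 < j -> j <= N -> h 0 j;
  gN : forall i, i < N -> h i N }.

Record Simp (h : nat -> nat -> bool) (N l v w r : nat) : Prop := MkSimp {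
  s0v : 0 < v; svw : v < w; swN : w < N; shvw : h v w;
  slv : l < v; shlw : h l w; sl : forall i, l < i -> i < v -> ~~ h i w;
  swr : w < r; srN : r <= N; shrv : h r v;
  sr : forall i, w < i -> i < r -> ~~ h i v }.

Definition mem4 (x a b c d : nat) : Prop := x = a \/ x = b \/ x = c \/ x = d.

Lemma nh (b : bool) : ~~ b -> b -> False. Proof. by move/negP. Qed.

Section Abs.
Variables (h : nat -> nat -> bool) (N : nat) (G : good h N).

Ltac slc S z := exact: (nh (@sl _ _ _ _ _ _ S z ltac:(lia) ltac:(lia))).
Ltac src S z := exact: (nh (@sr _ _ _ _ _ _ S z ltac:(lia) ltac:(lia))).

Lemma nonest l v w r : Simp h N l v w r ->
  forall z i, l < z -> z < v -> w < i -> i < r -> ~~ h z i.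
Proof.
move=> S.
suff H : forall k z i, i - z <= k -> l < z -> z < v -> w < i -> i < r -> ~~ h z i.
  by move=> z i; apply: (H (i - z)).
have Ha1 := svw S.
elim=> [|k IH] z i Hk H1 H2 H3 H4; first by exfalso; lia.
apply/negP => Hzi.
have [|y /andP[Hy1 Hy2] /andP[Hzy Hyi]] := gbar G _ Hzi; first by lia.
case: (ltngtP y v) => Hyv.
- by move: Hyi; apply/negP; apply: IH => //; lia.
- case: (ltngtP y w) => Hyw.
  + move: (gX G H2 Hyv Hyw Hzy (shvw S)). slc S z.
  + by move: Hzy; apply/negP; apply: IH => //; lia.
  + subst y. move: Hzy. slc S z.
- subst y. move: Hyi; rewrite (gsym G). src S i.
Qed.

Lemma zl_vwr l v w r : Simp h N l v w r ->
  forall z, v <= z -> z < w -> h z r ->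
  exists z', [/\ z <= z', z' < w, h z' r, h z' w & h w r].
Proof.
move=> S.
suff H : forall k z, w - z <= k -> v <= z -> z < w -> h z r ->
  exists z', [/\ z <= z', z' < w, h z' r, h z' w & h w r].
  by move=> z; apply: (H (w - z)).
have Ha1 := swr S.
elim=> [|k IH] z Hk H1 H2 H3; first by exfalso; lia.
have [|y /andP[Hy1 Hy2] /andP[Hzy Hyr]] := gbar G _ H3; first by lia.
case: (ltngtP y w) => Hyw.
- have [z' [? ? ? ? ?]] := IH y ltac:(lia) ltac:(lia) Hyw Hyr.
  exists z'; split => //; lia.
- exfalso. case: (ltngtP z v) => Hzv; first lia.
  + move: (gX G Hzv H2 Hyw (shvw S) Hzy). rewrite (gsym G). src S y.
  + subst z. move: Hzy; rewrite (gsym G). src S y.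
- subst y. by exists z; split.
Qed.

Lemma zl_lvr l v w r : Simp h N l v w r ->
  forall z, l < z -> z < v -> h z r ->
  exists z', [/\ z <= z', z' < v, h z' r & h z' v].
Proof.
move=> S.
suff H : forall k z, v - z <= k -> l < z -> z < v -> h z r ->
  exists z', [/\ z <= z', z' < v, h z' r & h z' v].
  by move=> z; apply: (H (v - z)).
have Ha1 := svw S; have Ha2 := swr S.
elim=> [|k IH] z Hk H1 H2 H3; first by exfalso; lia.
have [|y /andP[Hy1 Hy2] /andP[Hzy Hyr]] := gbar G _ H3; first by lia.
case: (ltngtP y v) => Hyv.
- have [z' [? ? ? ?]] := IH y ltac:(lia) ltac:(lia) Hyv Hyr.
  exists z'; split => //; lia.
- exfalso. case: (ltngtP y w) => Hyw.
  + move: (gX G H2 Hyv Hyw Hzy (shvw S)). slc S z.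
  + exact: (nh (nonest S H1 H2 Hyw Hy2) Hzy).
  + subst y. move: Hzy. slc S z.
- subst y. by exists z; split.
Qed.

Lemma hlv l v w r : Simp h N l v w r -> h l v.
Proof.
move=> S.
suff H : forall k z, z - v <= k -> v < z -> z <= w -> h l z -> h l v.
  exact: (H (w - v) w (leqnn _) (svw S) (leqnn _) (shlw S)).
have Ha1 := slv S.
elim=> [|k IH] z Hk H1 H2 H3; first by exfalso; lia.
have [|y /andP[Hy1 Hy2] /andP[Hly Hyz]] := gbar G _ H3; first by lia.
case: (ltngtP y v) => Hyv.
- exfalso. case: (ltngtP z w) => Hzw.
  + move: (gX G Hyv H1 Hzw Hyz (shvw S)). slc S y.
  + lia.
  + subst z. move: Hyz. slc S y.
- by apply: (IH y) => //; lia.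
- by subst y.
Qed.
End Abs.

Definition concl h N l v w r a b c := exists l' v' w' r',
  [/\ Simp h N l' v' w' r', mem4 a l' v' w' r', mem4 b l' v' w' r', mem4 c l' v' w' r'
    & exists e, mem4 e l' v' w' r' /\ ~ mem4 e l v w r].

Section Cases.
Variables (h : nat -> nat -> bool) (N : nat) (G : good h N).

Lemma case_vwr l v w r : Simp h N l v w r -> ~ (r = N /\ w = v.+1) ->
  concl h N l v w r v w r.
Proof.
move=> S NF.
have H1 := svw S; have H2 := swr S; have H3 := slv S; have H4 := srN S;
have H5 := swN S; have H6 := s0v S.
case: (boolP (has (fun x => (v < x < w) && h x w && h x r) (iota 0 w))) => Hx.
- have exP : exists x, (v < x < w) && h x w && h x r.
    by move/hasP: Hx => [x _ Px]; exists x.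
  case: (ex_minnP exP) => m /andP[/andP[/andP[Hm1 Hm2] Hmw] Hmr] Hmin.
  exists v, m, w, r; split; try (rewrite /mem4; lia).
  + constructor => //; try lia.
    * exact: shvw S.
    * move=> i Hi1 Hi2; apply/negP => Hiw.
      have Hir := gX G Hi2 Hm2 H2 Hiw Hmr.
      have : m <= i by apply: Hmin; rewrite Hiw Hir !andbT; apply/andP; split; lia.
      lia.
    * by rewrite (gsym G).
    * move=> i Hi1 Hi2; apply/negP => Him.
      have Hvi := gX G Hm1 Hm2 Hi1 (shvw S) (ltac:(by rewrite (gsym G))).
      apply: (nh (sr S Hi1 Hi2)). by rewrite (gsym G).
  + exists m; rewrite /mem4; split; lia.
- have Hno : forall x, v < x -> x < w -> h x w -> h x r -> False.
    move=> x Hx1 Hx2 Hxw Hxr.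
    have /negP := hasPn Hx x ltac:(rewrite mem_iota; lia); apply.
    by rewrite Hx1 Hx2 Hxw Hxr.
  have HrN : r < N.
    case: (ltngtP r N) => // Er; first lia.
    exfalso; apply: (Hno w.-1); try lia.
    + have := gpath G (_ : w.-1 < N); rewrite prednK; last lia. by apply; lia.
    + rewrite Er. apply: (gN G); lia.
  have Hrv : h v r by rewrite (gsym G); exact: shrv S.
  have [z' [_ _ Hz'r Hz'w Hwr]] := zl_vwr G S (leqnn v) H1 Hrv.
  have exP : exists i, (r < i <= N) && h i w.
    by exists N; rewrite HrN leqnn (gsym G) (gN G H5).
  case: (ex_minnP exP) => r' /andP[/andP[Hr1 Hr2] Hr'w] Hmin.
  exists v, w, r, r'; split; try (rewrite /mem4; lia).
  + constructor => //; try lia.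
    * move=> i Hi1 Hi2; apply/negP => Hir.
      have [z'' [? ? ? ? _]] := zl_vwr G S (ltnW Hi1) Hi2 Hir.
      apply: (Hno z'') => //; lia.
    * move=> i Hi1 Hi2; apply/negP => Hiw.
      have : r' <= i by apply: Hmin; rewrite Hiw andbT; apply/andP; split; lia.
      lia.
  + exists r'; rewrite /mem4; split; lia.
Qed.

Lemma case_lvr l v w r : Simp h N l v w r -> ~ (r = N /\ v = l.+1) ->
  concl h N l v w r l v r.
Proof.
move=> S NF.
have H1 := svw S; have H2 := swr S; have H3 := slv S; have H4 := srN S;
have H5 := swN S; have H6 := s0v S.
case: (boolP (has (fun x => (l < x < v) && h x v && h x r) (iota 0 v))) => Hx.
- have exP : exists x, (l < x < v) && h x v && h x r.
    by move/hasP: Hx => [x _ Px]; exists x.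
  case: (ex_minnP exP) => m /andP[/andP[/andP[Hm1 Hm2] Hmv] Hmr] Hmin.
  exists l, m, v, r; split; try (rewrite /mem4; lia).
  + constructor => //; try lia.
    * exact: (@hlv h N G l v w r S).
    * move=> i Hi1 Hi2; apply/negP => Hiv.
      have Hir := gX G Hi2 Hm2 (ltn_trans H1 H2) Hiv Hmr.
      have : m <= i by apply: Hmin; rewrite Hiv Hir !andbT; apply/andP; split; lia.
      lia.
    * by rewrite (gsym G).
    * move=> i Hi1 Hi2; apply/negP => Him.
      have Hmi : h m i by rewrite (gsym G).
      case: (ltngtP i w) => Hiw.
      - have := gX G Hm2 Hi1 Hiw Hmi (shvw S).
        exact: (nh (sl S Hm1 Hm2)).
      - exact: (nh (nonest G S Hm1 Hm2 Hiw Hi2) Hmi).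
      - subst i. exact: (nh (sl S Hm1 Hm2) Hmi).
  + exists m; rewrite /mem4; split; lia.
- have Hno : forall x, l < x -> x < v -> h x v -> h x r -> False.
    move=> x Hx1 Hx2 Hxv Hxr.
    have /negP := hasPn Hx x ltac:(rewrite mem_iota; lia); apply.
    by rewrite Hx1 Hx2 Hxv Hxr.
  have HrN : r < N.
    case: (ltngtP r N) => // Er; first lia.
    exfalso; apply: (Hno v.-1); try lia.
    + have := gpath G (_ : v.-1 < N); rewrite prednK; last lia. by apply; lia.
    + rewrite Er; apply: (gN G); lia.
  have Hrv : h v r by rewrite (gsym G); exact: shrv S.
  have Hlr : h l r := gX G H3 H1 H2 (shlw S) Hrv.
  have exP : exists i, (r < i <= N) && h i v.
    by exists N; rewrite HrN leqnn (gsym G) (gN G (ltn_trans H1 H5)).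
  case: (ex_minnP exP) => r' /andP[/andP[Hr1 Hr2] Hr'v] Hmin.
  exists l, v, r, r'; split; try (rewrite /mem4; lia).
  + constructor => //; try lia.
    * move=> i Hi1 Hi2; apply/negP => Hir.
      have [z'' [? ? ? ?]] := zl_lvr G S Hi1 Hi2 Hir.
      apply: (Hno z'') => //; lia.
    * move=> i Hi1 Hi2; apply/negP => Hiv.
      have : r' <= i by apply: Hmin; rewrite Hiv andbT; apply/andP; split; lia.
      lia.
  + exists r'; rewrite /mem4; split; lia.
Qed.
End Cases.

Definition hR (h : nat -> nat -> bool) N i j := (i <= N) && (j <= N) && h (N - i) (N - j).

Lemma goodR h N : good h N -> good (hR h N) N.
Proof.
move=> G; constructor.
- by move=> i j; rewrite /hR (gsym G (N - i)) [(i <= N) && _]andbC.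
- by move=> i j /andP[/andP[-> ->] _].
- move=> a b c d H1 H2 H3 /andP[/andP[Ha Hc] Hac] /andP[/andP[Hb Hd] Hbd].
  rewrite /hR Ha Hd /=.
  rewrite (gsym G) in Hbd; rewrite (gsym G) in Hac.
  have := gX G (_ : N - d < N - c) (_ : N - c < N - b) (_ : N - b < N - a) Hbd Hac.
  rewrite (gsym G); apply; lia.
- move=> a b H1 /andP[/andP[Ha Hb] Hab].
  rewrite (gsym G) in Hab.
  have [|x /andP[Hx1 Hx2] /andP[Hbx Hxa]] := gbar G _ Hab; first lia.
  exists (N - x); first (apply/andP; split; lia).
  rewrite /hR !subKn; try lia.
  rewrite (gsym G) Hxa (gsym G) Hbx.
  have -> : a <= N by [].
  have -> : b <= N by [].
  have -> : N - x <= N by apply: leq_subr.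
  by [].
- move=> i Hi; rewrite /hR.
  have -> : N - i = (N - i.+1).+1 by lia.
  rewrite (gsym G) (gpath G); last lia.
  rewrite andbT; apply/andP; split; lia.
- move=> j H1 H2; rewrite /hR subn0 H2 leq0n (gsym G) (gN G) //; lia.
- move=> i Hi; rewrite /hR subnn leqnn (ltnW Hi) (gsym G) (g0 G) //; lia.
Qed.

Lemma SimpR h h2 N l v w r :
  (forall i j, h i j = h j i) ->
  (forall i j, i <= N -> j <= N -> h2 i j = h (N - i) (N - j)) ->
  Simp h N l v w r -> Simp h2 N (N - r) (N - w) (N - v) (N - l).
Proof.
move=> Hs Hh [H1 H2 H3 H4 H5 H6 H7 H8 H9 H10 H11].
constructor; try lia.
- rewrite Hh; try lia. rewrite !subKn; try lia. by rewrite Hs.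
- by rewrite Hh ?subKn //; lia.
- move=> i Hi1 Hi2; rewrite Hh; try lia. rewrite subKn; last lia. apply: H11; lia.
- by rewrite Hh ?subKn //; lia.
- move=> i Hi1 Hi2; rewrite Hh; try lia. rewrite subKn; last lia. apply: H7; lia.
Qed.

Lemma Simp_bnd h N l v w r : Simp h N l v w r ->
  [/\ 0 < v, l < v, v < w, w < r & r <= N].
Proof. by case. Qed.

Lemma mem4_rev N x l v w r : x <= N -> l <= N -> v <= N -> w <= N -> r <= N ->
  mem4 (N - x) l v w r -> mem4 x (N - r) (N - w) (N - v) (N - l).
Proof.
move=> H1 H2 H3 H4 H5; rewrite /mem4.
case=> [E|[E|[E|E]]]; [right; right; right | right; right; left | right; left | left]; lia.
Qed.

Lemma rev_concl h N l v w r a b c : good h N -> Simp h N l v w r ->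
  a <= N -> b <= N -> c <= N ->
  concl (hR h N) N (N - r) (N - w) (N - v) (N - l) (N - c) (N - b) (N - a) ->
  concl h N l v w r a b c.
Proof.
move=> G S Ha Hb Hc [l' [v' [w' [r' [S' m1 m2 m3 [e [me nme]]]]]]].
have G2 := goodR G.
have Hback : forall i j, i <= N -> j <= N -> h i j = hR h N (N - i) (N - j).
  by move=> i j Hi Hj; rewrite /hR !subKn // !leq_subr.
have S'' := SimpR (gsym G2) Hback S'.
have [? ? ? ? ?] := Simp_bnd S; have [? ? ? ? ?] := Simp_bnd S'.
exists (N - r'), (N - w'), (N - v'), (N - l'); split => //.
- apply: mem4_rev m3; lia.
- apply: mem4_rev m2; lia.
- apply: mem4_rev m1; lia.
- have He : e <= N by move: me; rewrite /mem4; lia.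
  exists (N - e); split.
  + apply: mem4_rev; rewrite ?subKn //; lia.
  + move=> m; apply: nme; apply: mem4_rev; rewrite ?subKn //; lia.
Qed.

Lemma mainabs h N l v w r a b c : good h N -> Simp h N l v w r ->
  a < b -> b < c -> mem4 a l v w r -> mem4 b l v w r -> mem4 c l v w r ->
  ~ (a = 0 /\ c = b.+1) -> ~ (c = N /\ b = a.+1) ->
  concl h N l v w r a b c.
Proof.
move=> G S Hab Hbc Ha Hb Hc NF1 NF2.
have [B1 B2 B3 B4 B5] := Simp_bnd S.
have Hb1 : c <= N by move: Hc; rewrite /mem4; lia.
move: Hab Hbc NF1 NF2 Hb1.
case: Ha => [->|[->|[->|->]]]; case: Hb => [->|[->|[->|->]]];
  case: Hc => [->|[->|[->|->]]]; try lia; move=> H1 H2 NF1 NF2 Hb1.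
- apply: rev_concl => //; try lia.
  have S2 : Simp (hR h N) N (N - r) (N - w) (N - v) (N - l).
    apply: SimpR (gsym G) _ S. by move=> i j Hi Hj; rewrite /hR Hi Hj.
  apply: (case_vwr (goodR G) S2); lia.
- apply: (case_lvr G S); lia.
- apply: rev_concl => //; try lia.
  have S2 : Simp (hR h N) N (N - r) (N - w) (N - v) (N - l).
    apply: SimpR (gsym G) _ S. by move=> i j Hi Hj; rewrite /hR Hi Hj.
  apply: (case_lvr (goodR G) S2); lia.
- apply: (case_vwr G S); lia.
Qed.

Lemma cardfsU1r (A : {fset nat}) x : #|` A `|` [fset x]| = ((x \notin A) + #|` A|)%N.
Proof. by rewrite fsetUC cardfsU1. Qed.

Lemma card4 a b c d : a < b -> b < c -> c < d -> #|` [fset a; b; c; d]| = 4.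
Proof. move=> H1 H2 H3. rewrite !cardfsU1r cardfs1 !inE. lia. Qed.

Section Glue.
Variables (n : nat) (E : rel nat) (GE : graph_on n E) (PE : persistent n E).

Lemma adj_bnd x y : adj E x y -> [/\ 0 < x, x <= n, 0 < y, y <= n & x != y].
Proof. by rewrite /adj => /orP[] /GE [? ? ?]; split => //; lia. Qed.

Lemma adj_hadj x y : adj E x y -> hadj n E x y.
Proof. by rewrite /hadj => ->. Qed.

Lemma hadj_adj x y : 0 < x -> x <= n -> 0 < y -> y <= n -> hadj n E x y = adj E x y.
Proof. move=> *; rewrite /hadj; case: (adj E x y) => //=; lia. Qed.

Lemma good_hadj : good (hadj n E) n.+1.
Proof.
case: PE => P1 P2 P3.
have Hb : forall i j, hadj n E i j -> (i <= n.+1) && (j <= n.+1).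
  move=> i j; rewrite /hadj => /orP[/adj_bnd [? ? ? ? ?]|]; lia.
constructor => //.
- move=> i j; rewrite /hadj /adj.
  case: (E i j); case: (E j i) => //=; lia.
- move=> a b c d H1 H2 H3 Hac Hbd.
  have := Hb _ _ Hac; have := Hb _ _ Hbd => B1 B2.
  case: (posnP a) => Ha.
    by rewrite /hadj; apply/orP; right; lia.
  case: (ltnP d n.+1) => Hd; last by rewrite /hadj; apply/orP; right; lia.
  rewrite hadj_adj in Hac; try lia.
  rewrite hadj_adj in Hbd; try lia.
  by apply: adj_hadj; apply: (P2 a b c d).
- move=> a b H1 Hab.
  have := Hb _ _ Hab => B.
  case: (posnP a) => Ha.
    exists b.-1; first lia.
    apply/andP; split; first by rewrite /hadj; apply/orP; right; lia.
    case: (ltnP b n.+1) => Hbn; last by rewrite /hadj; apply/orP; right; lia.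
    apply: adj_hadj. have := P1 b.-1 ltac:(lia) ltac:(lia). by rewrite prednK //; lia.
  case: (ltnP b n.+1) => Hbn; last first.
    exists a.+1; first lia.
    apply/andP; split; last by rewrite /hadj; apply/orP; right; lia.
    apply: adj_hadj; apply: P1; lia.
  rewrite hadj_adj in Hab; try lia.
  have [|x Hx /andP[Hax Hxb]] := P3 a b ltac:(lia) Hab; first lia.
  by exists x => //; rewrite !adj_hadj.
- move=> i Hi.
  case: (posnP i) => Hi0; first by rewrite /hadj; apply/orP; right; lia.
  case: (ltnP i n) => Hin; last by rewrite /hadj; apply/orP; right; lia.
  apply: adj_hadj; apply: P1; lia.
- by move=> j H1 H2; rewrite /hadj; apply/orP; right; lia.
- by move=> i H1; rewrite /hadj; apply/orP; right; lia.
Qed.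

Lemma xi_of_simp l v w r : Simp (hadj n E) n.+1 l v w r ->
  adj E v w /\ xiG n E v w = [fset l; v; w; r].
Proof.
move=> S.
have [B1 B2 B3 B4 B5] := Simp_bnd S.
have H6 := swN S.
split.
- rewrite -hadj_adj; try lia. exact: shvw S.
- rewrite /xiG /ellG /rG.
  have E1 := @bigmax_spec (fun i => hadj n E i w) v l B2 (shlw S) (sl S).
  rewrite E1.
  have E2 := @bigmin_spec (fun i => hadj n E i v) n.+1 w.+1 n.+2 r B4 ltac:(lia) B5 (shrv S) (sr S).
  by rewrite E2.
Qed.

Lemma simp_of v w : v < w -> adj E v w ->
  exists l r, Simp (hadj n E) n.+1 l v w r.
Proof.
move=> Hvw Hadj.
have [B1 B2 B3 B4 B5] := adj_bnd Hadj.
have exP : exists i, (i < v) && hadj n E i w.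
  exists 0; rewrite B1 /=; rewrite /hadj; apply/orP; right; lia.
have ubP : forall i, (i < v) && hadj n E i w -> i <= v by move=> i /andP[? _]; lia.
case: (ex_maxnP exP ubP) => l /andP[Hl1 Hl2] Hlmax.
have exP2 : exists i, (w < i <= n.+1) && hadj n E i v.
  exists n.+1; rewrite /hadj; apply/andP; split; [lia | apply/orP; right; lia].
case: (ex_minnP exP2) => r /andP[/andP[Hr1 Hr2] Hr3] Hrmin.
exists l, r; constructor => //; try lia.
- exact: adj_hadj.
- move=> i Hi1 Hi2; apply/negP => Hi.
  have := Hlmax i; rewrite Hi2 Hi => /(_ isT); lia.
- move=> i Hi1 Hi2; apply/negP => Hi.
  have : r <= i by apply: Hrmin; rewrite Hi andbT; apply/andP; split; lia.
  lia.
Qed.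
End Glue.

Unset Implicit Arguments.
Theorem lemma11 (n : nat) (E : rel nat) (S : {fset nat}) (a b c : nat) :
  graph_on n E -> persistent n E ->
  inXi n E S -> #|` S| = 4 ->
  a < b -> b < c -> a \in S -> b \in S -> c \in S ->
  ~ inF2 n [fset a; b; c] ->
  exists S' : {fset nat},
    [/\ inXi n E S', #|` S'| = 4, S' <> S & [fset a; b; c] `<=` S'].
Proof.
move=> GE PE [v [w [Hvw Hadj ->]]] _ Hab Hbc Ha Hb Hc NF.
have G := good_hadj GE PE.
have [l [r Sm]] := simp_of GE Hvw Hadj.
have [_ Hxi] := xi_of_simp Sm.
rewrite Hxi in Ha Hb Hc *.
have [B1 B2 B3 B4 B5] := Simp_bnd Sm.
have ma : mem4 a l v w r by move: Ha; rewrite !inE /mem4; lia.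
have mb : mem4 b l v w r by move: Hb; rewrite !inE /mem4; lia.
have mc : mem4 c l v w r by move: Hc; rewrite !inE /mem4; lia.
have Hcn : c <= n.+1 by move: mc; rewrite /mem4; lia.
have NF1 : ~ (a = 0 /\ c = b.+1).
  move=> [Ea Ec]; subst a c; apply: NF; exists b; split; try lia. by left.
have NF2 : ~ (c = n.+1 /\ b = a.+1).
  move=> [Ec Eb]; subst c b; apply: NF; exists a.+1; split; try lia. by right.
have [l' [v' [w' [r' [S' m1 m2 m3 [e [me nme]]]]]]] :=
  mainabs G Sm Hab Hbc ma mb mc NF1 NF2.
have [Hadj' Hxi'] := xi_of_simp S'.
have [C1 C2 C3 C4 C5] := Simp_bnd S'.
exists [fset l'; v'; w'; r']; split.
- by exists v', w'; split.
- exact: card4.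
- move=> Eq; apply: nme.
  have : e \in [fset l'; v'; w'; r'] by rewrite !inE; move: me; rewrite /mem4; lia.
  by rewrite Eq !inE /mem4; lia.
- apply/fsubsetP => x; rewrite !inE => /orP[/orP[]|] /eqP ->.
  + by move: m1; rewrite /mem4; lia.
  + by move: m2; rewrite /mem4; lia.
  + by move: m3; rewrite /mem4; lia.
Qed.
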